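(* Let $Q$ be a finite Moufang loop and let $d=2^a3^b>1$ with $a,b\ge 0$ integers. Then $Q$ is uniquely $d$-divisible if and only if $|Q|$ is coprime to $d$.
   Context: A loop is a magma with identity in which all left and right translations are bijections; it is Moufang if it satisfies $xy\cdot zx=(x\cdot yz)x$ (Moufang loops are power associative). A power associative loop is uniquely $d$-divisible if the map $x\mapsto x^d$ is a bijection. *)

(* Defs.v *)
From mathcomp Require Import all_boot.
Set Implicit Arguments. Unset Strict Implicit. Unset Printing Implicit Defensive.

Definition is_loop (T : Type) (mul : T -> T -> T) (e : T) : Prop :=
  [/\ (forall x, mul e x = x), (forall x, mul x e = x),
      (forall a, bijective (mul a)) & (forall a, bijective (fun x => mul x a))].

Definition moufang_identity (T : Type) (mul : T -> T -> T) : Prop :=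
  forall x y z, mul (mul x y) (mul z x) = mul (mul x (mul y z)) x.

(* Powers x^n = x (x (... (x e))) ; well defined in power-associative loops. *)
Definition lpow (T : Type) (mul : T -> T -> T) (e : T) (x : T) (n : nat) : T :=
  iter n (mul x) e.

Definition uniquely_divisible (T : Type) (mul : T -> T -> T) (e : T) (d : nat) : Prop :=
  bijective (fun x => lpow mul e x d).

(* Main.v *)
Require Import Defs.
From mathcomp Require Import all_boot all_fingroup all_solvable.
Set Implicit Arguments. Unset Strict Implicit. Unset Printing Implicit Defensive.

Section ML.
Variables (T : finType) (mul : T -> T -> T) (e : T).
Hypothesis L : is_loop mul e.
Hypothesis M : moufang_identity mul.

Lemma m1x x : mul e x = x. Proof. by case: L. Qed.
Lemma mx1 x : mul x e = x. Proof. by case: L. Qed.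
Lemma lcan a x y : mul a x = mul a y -> x = y.
Proof. by case: L => _ _ /(_ a) /bij_inj H _; apply: H. Qed.
Lemma rcan a x y : mul x a = mul y a -> x = y.
Proof. by case: L => _ _ _ /(_ a) /bij_inj H; apply: H. Qed.

Definition linv x := odflt e [pick y | mul x y == e].
Lemma mxV x : mul x (linv x) = e.
Proof.
rewrite /linv; case: pickP => [y /eqP //|H].
case: L => _ _ /(_ x) [g _ gK]; have := H (g e); by rewrite gK eqxx.
Qed.
Lemma flex x z : mul x (mul z x) = mul (mul x z) x.
Proof. by have := M x e z; rewrite mx1 !m1x. Qed.
Lemma lip_aux x z : mul x (mul (linv x) z) = z.
Proof. by have := M x (linv x) z; rewrite mxV m1x => /rcan. Qed.
Lemma mVx x : mul (linv x) x = e.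
Proof. by apply: (@lcan x); rewrite lip_aux mx1. Qed.
Lemma invK x : linv (linv x) = x.
Proof. by apply: (@lcan (linv x)); rewrite mVx mxV. Qed.
Lemma lip x z : mul (linv x) (mul x z) = z.
Proof. by have := lip_aux (linv x) z; rewrite invK. Qed.
Lemma rip_aux x y : mul (mul y (linv x)) x = y.
Proof. by have := M x y (linv x); rewrite mVx mx1 -flex => /lcan. Qed.
Lemma rip x y : mul (mul y x) (linv x) = y.
Proof. by have := rip_aux (linv x) y; rewrite invK. Qed.

Lemma pow_comm x n : mul (lpow mul e x n) x = mul x (lpow mul e x n).
Proof.
elim: n => [|n IH] /=; first by rewrite /lpow /= m1x mx1.
rewrite /lpow /= -/(lpow mul e x n) -flex IH //.
Qed.

Lemma iterR_comm x y n : iter n (fun z => mul z x) (mul x y) = mul x (iter n (fun z => mul z x) y).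
Proof. by elim: n => [|n IH] //=; rewrite IH flex. Qed.

Lemma powR x n y : mul y (lpow mul e x n) = iter n (fun z => mul z x) y.
Proof.
elim: n y => [|n IH] y; first by rewrite /lpow /= mx1.
rewrite -(lip_aux x y); set y' := mul (linv x) y.
rewrite /lpow iterS -/(lpow mul e x n) -pow_comm M IH -iterR_comm.
by rewrite iterS.
Qed.

Lemma pow_iter x n : lpow mul e x n = iter n (fun z => mul z x) e.
Proof. by rewrite -powR m1x. Qed.

Lemma pow_add x m n : lpow mul e x (m + n) = mul (lpow mul e x m) (lpow mul e x n).
Proof. by rewrite powR !pow_iter addnC iterD. Qed.

Lemma pow_mul x m k : lpow mul e (lpow mul e x m) k = lpow mul e x (m * k).
Proof.
elim: k => [|k IH]; first by rewrite muln0.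
by rewrite /lpow iterS -!/(lpow _ _ _ _) IH mulnS pow_add.
Qed.

Lemma pow_e k : lpow mul e e k = e.
Proof. by elim: k => [|k IH] //; rewrite /lpow iterS -/(lpow _ _ _ _) IH m1x. Qed.

End ML.
Lemma pow_card (T : finType) (mul : T -> T -> T) (e : T) (L : is_loop mul e) (M : moufang_identity mul) x :
  lpow mul e x #|T| = e.
Proof.
have Rinj : injective (fun z => mul z x) by move=> ? ?; apply: (rcan L).
pose s := perm Rinj.
have sE n z : (s ^+ n)%g z = mul z (lpow mul e x n).
  by rewrite permX (powR L M); apply: eq_iter => w; rewrite permE.
have reg z : 'C_(<[s]>)[z | 'P]%g = 1%g.
  apply/trivgP/subsetP => t /setIP [/cycleP [m ->] /astab1P].
  move=> Hz; have : (s ^+ m)%g z = z by exact: Hz. rewrite sE -{2}(mx1 L z) => /(lcan L) xm.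
  by rewrite inE; apply/eqP/permP => w; rewrite sE xm (mx1 L) perm1.
have orb z : #|orbit 'P <[s]>%g z| = #[s]%g.
  by have := card_orbit_stab 'P <[s]>%g z; rewrite reg cards1 muln1.
have actsT : [acts <[s]>%g, on [set: T] | 'P].
  by apply/actsP => t _ z; rewrite !inE.
have := card_uniform_partition _ (orbit_partition actsT).
rewrite cardsT => /(_ #[s]%g) -> ; last by move=> _ /imsetP [z _ ->]; apply: orb.
have : (s ^+ (#|orbit 'P <[s]>%g @: [set: T]| * #[s]))%g = 1%g.
  by apply/eqP; rewrite -order_dvdn dvdn_mull.
move/(congr1 (fun t : {perm T} => t e)); rewrite sE perm1 (m1x L) => ->.
by [].
Qed.
Section FixMod.
Local Open Scope group_scope.
Lemma fix_mod (S : finType) (f : S -> S) p : prime p -> (forall z, iter p f z = z) ->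
  #|S| = #|[set z | f z == z]| %[mod p].
Proof.
move=> pp fp.
have finj : injective f.
  apply: (@can_inj _ _ f (iter p.-1 f)) => z.
  by rewrite -iterSr prednK ?prime_gt0 ?fp.
pose s := perm finj.
have sE n z : (s ^+ n)%g z = iter n f z.
  by rewrite permX; apply: eq_iter => w; rewrite permE.
have pG : p.-group <[s]>%g.
  apply: pnat_dvd (pnat_id pp); rewrite -orderE order_dvdn.
  by apply/eqP/permP => z; rewrite sE fp perm1.
have actsT : [acts <[s]>%g, on [set: S] | 'P].
  by apply/actsP => t _ z; rewrite !inE.
rewrite -cardsT (pgroup_fix_mod pG actsT) afix_cycle.
congr (_ %% _); apply: eq_card => z; rewrite !inE sub1set inE.
by rewrite /= apermE permE.
Qed.
End FixMod.
Section Main.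
Variables (T : finType) (mul : T -> T -> T) (e : T).
Hypothesis L : is_loop mul e.
Hypothesis M : moufang_identity mul.

Lemma inv_uniq u v : mul u v = e -> linv mul e u = v.
Proof. by move=> H; apply: (lcan L (a := u)); rewrite (mxV L) H. Qed.

Lemma cyc a b c : mul (mul a b) c = e -> mul (mul b c) a = e.
Proof.
move=> H.
have Hab : mul a b = linv mul e c.
  by rewrite -(rip L M c (mul a b)) H (m1x L).
have Hb : b = mul (linv mul e a) (linv mul e c) by rewrite -Hab (lip L M).
by rewrite Hb (rip_aux L M) (mVx L M).
Qed.

Lemma fix_big (S : finType) (f : S -> S) p (z0 : S) : prime p ->
  (forall z, iter p f z = z) -> p %| #|S| -> f z0 = z0 ->
  exists z, z != z0 /\ f z = z.
Proof.
move=> pp fp pS fz0.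
have := fix_mod pp fp; rewrite (eqP pS) => /esym /eqP; rewrite -/(dvdn _ _) => pF.
have : 1 < #|[set z | f z == z]|.
  apply: leq_trans (prime_gt1 pp) (dvdn_leq _ pF).
  by apply/card_gt0P; exists z0; rewrite inE fz0.
case/card_gt1P => x [y [Hx Hy xy]]; rewrite !inE in Hx Hy.
have [xz|xz] := eqVneq x z0; last by exists x; split => //; apply/eqP.
by exists y; split; [rewrite -xz eq_sym | apply/eqP].
Qed.

Lemma cauchy23 p : (p = 2 \/ p = 3) -> p %| #|T| ->
  exists x, x != e /\ lpow mul e x p = e.
Proof.
case=> ->.
  move=> H2.
  have ie : linv mul e e = e by apply: inv_uniq; rewrite (m1x L).
  have [x [xe fx]] := @fix_big T (linv mul e) 2 e erefl (fun z => invK L M z) H2 ie.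
  exists x; split => //; rewrite /lpow /= (mx1 L).
  by rewrite -{2}fx (mxV L).
move=> H3.
pose f (w : T * T) := (w.2, linv mul e (mul w.1 w.2)).
have f3 : forall w, iter 3 f w = w.
  case=> x y /=; rewrite /f /=.
  have h1 : mul (mul x y) (linv mul e (mul x y)) = e by rewrite (mxV L).
  have h2 := cyc h1; have h3 := cyc h2.
  by rewrite (inv_uniq h2) (inv_uniq h3).
have fe : f (e, e) = (e, e).
  by rewrite /f /= (m1x L); congr pair; apply: inv_uniq; rewrite (m1x L).
have H3' : 3 %| #|{: T * T}| by rewrite card_prod dvdn_mulr.
have [[x y] [xe fx]] := @fix_big _ f 3 (e, e) erefl f3 H3' fe.
move: fx; rewrite /f /= => [[yx ixx]]; subst y.
exists x; split.
  by apply: contraNneq xe => ->.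
rewrite /lpow /= (mx1 L) (flex L M).
by rewrite -{3}ixx (mxV L).
Qed.

End Main.
Theorem proposition1p13 (T : finType) (mul : T -> T -> T) (e : T) (a b : nat) :
  is_loop mul e -> moufang_identity mul ->
  1 < 2 ^ a * 3 ^ b ->
  (uniquely_divisible mul e (2 ^ a * 3 ^ b) <-> coprime #|T| (2 ^ a * 3 ^ b)).
Proof.
move=> L M d1; set d := 2 ^ a * 3 ^ b in d1 *.
split.
  move=> [g fK _]; apply/negPn/negP => nc.
  have g1 : 1 < gcdn #|T| d.
    rewrite ltn_neqAle eq_sym nc /= gcdn_gt0; apply/orP; right; exact: ltnW.
  set p := pdiv (gcdn #|T| d).
  have pp : prime p by apply: pdiv_prime.
  have pg : p %| gcdn #|T| d by apply: pdiv_dvd.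
  have pT : p %| #|T| by apply: dvdn_trans pg (dvdn_gcdl _ _).
  have pd : p %| d by apply: dvdn_trans pg (dvdn_gcdr _ _).
  have p23 : p = 2 \/ p = 3.
    move: pd; rewrite /d Euclid_dvdM // !Euclid_dvdX // => /orP [/andP [H _]|/andP [H _]].
      by left; apply/(prime_nt_dvdP _ _ H) => //; rewrite neq_ltn prime_gt1 ?orbT.
    by right; apply/(prime_nt_dvdP _ _ H) => //; rewrite neq_ltn prime_gt1 ?orbT.
  have [x [xe xp]] := cauchy23 L M p23 pT.
  case/dvdnP: pd => k dk.
  have : lpow mul e x d = lpow mul e e d.
    by rewrite dk mulnC -(pow_mul L M) xp !(pow_e L).
  by move/(can_inj fK) => xe'; rewrite xe' eqxx in xe.
move=> cop.
have d0 : 0 < d by exact: ltnW.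
case: (egcdnP #|T| d0) => km kn Hk _.
rewrite gcdnC (eqP cop) in Hk.
have fK : cancel (fun x => lpow mul e x d) (fun y => lpow mul e y km).
  move=> x /=; rewrite (pow_mul L M) mulnC Hk (pow_add L M) mulnC -(pow_mul L M).
  by rewrite (pow_card L M) (pow_e L) (m1x L) /lpow /= (mx1 L).
exact: injF_bij (can_inj fK).
Qed.
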